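(* Let $G$ be a graph (simple, connected, locally finite) all of whose edges have length $k$, let $\mathcal{L}(G)$ be its line graph and $h:\mathcal{L}(G)\to G$ the map defined below. Let $\gamma^*$ be a geodesic of $\mathcal{L}(G)$ joining points $x,y$ that are each either a vertex of $\mathcal{L}(G)$ or a midpoint of an edge of $\mathcal{L}(G)$. Then $h(\gamma^* )$ is the union of three geodesics $\gamma_1^*,\gamma_2^*,\gamma_3^*$ of $G$ with $h(x)\in\gamma_1^*$, $h(y)\in\gamma_3^*$ and $0\le L(\gamma_1^* ),L(\gamma_3^* )\le k/2$.
   Context: Graphs are regarded as geodesic metric spaces: each edge is identified with a real interval of its length and distances are shortest-path distances. The line graph $\mathcal{L}(G)$ has a vertex $V_e$ for each edge $e$ of $G$, and an edge $[V_{e_i},V_{e_j}]$ whenever $e_i\neq e_j$ and $e_i\cap e_j\neq\varnothing$, of length $(L(e_i)+L(e_j))/2$ (here equal to $k$). $Pm(e)$ denotes the midpoint of $e$. The map $h$ is defined by $h(V_e)=Pm(e)$, $h$(midpoint of $[V_{e_i},V_{e_j}]$)$=e_i\cap e_j$ (a vertex of $G$), and for $x_0$ in the interior of the segment from $V_e$ to the midpoint of $[V_e,V_{e_0}]$, $h(x_0)$ is the point of the half-edge of $e$ from $Pm(e)$ to $e\cap e_0$ at distance $d(x_0,V_e)$ from $Pm(e)$. *)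

(* Defs.v *)
From Stdlib Require Import Reals Lra List ClassicalEpsilon ClassicalDescription.
Open Scope R_scope.

Set Implicit Arguments.

Inductive walk (V : Type) (adj : V -> V -> Prop) : nat -> V -> V -> Prop :=
| walk0 u : walk adj 0 u u
| walkS n u w v : adj u w -> walk adj n w v -> walk adj (S n) u v.

Definition simple_graph (V : Type) (adj : V -> V -> Prop) : Prop :=
  (forall u v, adj u v -> adj v u) /\ (forall u, ~ adj u u).

Definition connected (V : Type) (adj : V -> V -> Prop) : Prop :=
  forall u v, exists n, walk adj n u v.

Definition locally_finite (V : Type) (adj : V -> V -> Prop) : Prop :=
  forall u, exists l : list V, forall v, adj u v -> In v l.

(** combinatorial distance: the least length of a walk (meaningful for
    connected graphs) *)
Definition gdist (V : Type) (adj : V -> V -> Prop) (u v : V) : nat :=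
  epsilon (inhabits 0%nat)
    (fun n => walk adj n u v /\ forall m, walk adj m u v -> (n <= m)%nat).

(** * Metric graph with all edges of length [len]
    A point is represented by [MPoint a b t] with [adj a b], [0 <= t <= len]:
    the point of the edge [a b] at distance [t] from [a].  Different
    representations of the same point (e.g. [MPoint a b t] and
    [MPoint b a (len - t)], or a vertex seen on different incident edges)
    are at distance 0; points are compared up to distance 0. *)

Record mpoint (V : Type) := MPoint { mp_a : V; mp_b : V; mp_t : R }.
Arguments MPoint {V}.

Definition is_mpoint (V : Type) (adj : V -> V -> Prop) (len : R) (p : mpoint V)
  : Prop := adj (mp_a p) (mp_b p) /\ 0 <= mp_t p <= len.

Definition route (V : Type) (adj : V -> V -> Prop) (len : R)
  (dp : R) (x y : V) (dq : R) : R :=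
  dp + len * INR (gdist adj x y) + dq.

Definition mdist (V : Type) (adj : V -> V -> Prop) (len : R) (p q : mpoint V) : R :=
  let a := mp_a p in let b := mp_b p in let t := mp_t p in
  let c := mp_a q in let e := mp_b q in let s := mp_t q in
  if excluded_middle_informative (a = c /\ b = e) then Rabs (t - s)
  else if excluded_middle_informative (a = e /\ b = c) then Rabs (t - (len - s))
  else Rmin (Rmin (route adj len t a c s) (route adj len t a e (len - s)))
            (Rmin (route adj len (len - t) b c s)
                  (route adj len (len - t) b e (len - s))).

Definition geodesic (P : Type) (valid : P -> Prop) (d : P -> P -> R)
  (g : R -> P) (L : R) : Prop :=
  0 <= L /\ (forall s, 0 <= s <= L -> valid (g s)) /\
  forall s t, 0 <= s <= L -> 0 <= t <= L -> d (g s) (g t) = Rabs (s - t).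

Definition on_path (P : Type) (d : P -> P -> R) (g : R -> P) (L : R) (q : P)
  : Prop := exists s, 0 <= s <= L /\ d (g s) q = 0.

Definition vpair (V : Type) (a b : V) : V -> Prop := fun z => z = a \/ z = b.

Definition ledge (V : Type) (adj : V -> V -> Prop) : Type :=
  { s : V -> Prop | exists a b, adj a b /\ s = vpair a b }.

Definition ladj (V : Type) (adj : V -> V -> Prop) (e f : ledge adj) : Prop :=
  e <> f /\ exists x, proj1_sig e x /\ proj1_sig f x.

Definition llen (k : R) : R := (k + k) / 2.

Definition ledge_inh (V : Type) (adj : V -> V -> Prop) (e : ledge adj)
  : inhabited (V * V * V) :=
  match proj2_sig e with ex_intro _ a _ => inhabits (a, a, a) end.

(** for adjacent e, f: (x, ye, yf) with e = {x,ye}, f = {x,yf}, so x = e ∩ f *)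
Definition common_data (V : Type) (adj : V -> V -> Prop) (e f : ledge adj)
  : V * V * V :=
  epsilon (ledge_inh e)
    (fun '(x, ye, yf) => proj1_sig e = vpair x ye /\ proj1_sig f = vpair x yf
                         /\ adj x ye /\ adj x yf).

(** A point of L(G) is [MPoint e f t] on the edge
    [V_e V_f] at distance t from V_e.  For t <= k/2 (segment from V_e to the
    midpoint) h gives the point of the half-edge of e from Pm(e) to e ∩ f at
    distance t from Pm(e); for t >= k/2 symmetrically on f (distance
    llen k - t from Pm(f)).  In particular h(V_e) = Pm(e) and h(midpoint) =
    e ∩ f. *)
Definition hmap (V : Type) (adj : V -> V -> Prop) (k : R)
  (p : mpoint (ledge adj)) : mpoint V :=
  let '(x, ye, yf) := common_data (mp_a p) (mp_b p) in
  let t := mp_t p in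
  if Rle_dec t (llen k / 2) then MPoint x ye (k / 2 - t)
  else MPoint x yf (k / 2 - (llen k - t)).

Definition vertex_or_mid (V : Type) (adj : V -> V -> Prop) (k : R)
  (p : mpoint (ledge adj)) : Prop :=
  mp_t p = 0 \/ mp_t p = llen k / 2 \/ mp_t p = llen k.

(* Main.v *)
Require Import Defs.
From Stdlib Require Import Reals.
From Stdlib Require Import Lra Lia List ClassicalEpsilon ClassicalDescription Classical ProofIrrelevance FunctionalExtensionality PropExtensionality Wf_nat.
Open Scope R_scope.
Set Default Proof Using "All".

Ltac rsolve := unfold Rmin, Rmax, Rabs in *;
  repeat match goal with
  | |- context [Rle_dec ?a ?b] => destruct (Rle_dec a b)
  | H : context [Rle_dec ?a ?b] |- _ => destruct (Rle_dec a b)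
  | |- context [Rcase_abs ?a] => destruct (Rcase_abs a)
  | H : context [Rcase_abs ?a] |- _ => destruct (Rcase_abs a)
  end; lra.

Lemma Rmin_case_eq u v w : Rmin u v = w -> u = w \/ v = w.
Proof. unfold Rmin; destruct Rle_dec; auto. Qed.


Section Gen.
Variables (V : Type) (adj : V -> V -> Prop) (len : R).
Hypothesis Hsym : forall u v, adj u v -> adj v u.
Hypothesis Hirr : forall u, ~ adj u u.
Hypothesis Hconn : connected adj.
Hypothesis Hlen : 0 < len.

Lemma walk_app : forall n u w, walk adj n u w -> forall m v, walk adj m w v -> walk adj (n + m) u v.
Proof. induction 1; intros; simpl; auto. econstructor; eauto. Qed.

Lemma walk_rev : forall n u v, walk adj n u v -> walk adj n v u.
Proof.
  induction 1. constructor.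
  replace (S n) with (n + 1)%nat by lia. eapply walk_app; eauto.
  econstructor. apply Hsym; eauto. constructor.
Qed.

Lemma ex_min_walk u v : exists n, walk adj n u v /\ forall m, walk adj m u v -> (n <= m)%nat.
Proof.
  destruct (Hconn u v) as [n0 Hn0].
  destruct (dec_inh_nat_subset_has_unique_least_element (fun n => walk adj n u v)) as [n [[Hn Hmin] _]].
  - intro n; apply classic.
  - exists n0; exact Hn0.
  - exists n; split; auto.
Qed.

Lemma gd_spec u v : walk adj (gdist adj u v) u v /\ forall m, walk adj m u v -> (gdist adj u v <= m)%nat.
Proof. unfold gdist. apply epsilon_spec. apply ex_min_walk. Qed.

Lemma gd_le u v m : walk adj m u v -> (gdist adj u v <= m)%nat.
Proof. intro; apply gd_spec; auto. Qed.

Lemma gd_refl u : gdist adj u u = 0%nat.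
Proof. pose proof (@gd_le u u 0 (walk0 adj u)). lia. Qed.

Lemma gd_zero u v : gdist adj u v = 0%nat -> u = v.
Proof. intro H. pose proof (proj1 (gd_spec u v)) as W. rewrite H in W. inversion W; auto. Qed.

Lemma gd_tri u v w : (gdist adj u w <= gdist adj u v + gdist adj v w)%nat.
Proof. apply gd_le. eapply walk_app; apply gd_spec. Qed.

Lemma gd_sym u v : gdist adj u v = gdist adj v u.
Proof.
  apply Nat.le_antisymm; apply gd_le; apply walk_rev; apply gd_spec.
Qed.

Lemma gd_adj u v : adj u v -> (gdist adj u v <= 1)%nat.
Proof. intro H. apply gd_le. econstructor; eauto. constructor. Qed.

Definition DL (u v : V) : R := len * INR (gdist adj u v).

Lemma DL_nn u v : 0 <= DL u v.
Proof. unfold DL. apply Rmult_le_pos; [lra| apply pos_INR]. Qed.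
Lemma DL_refl u : DL u u = 0.
Proof. unfold DL. rewrite gd_refl. simpl. ring. Qed.
Lemma DL_sym u v : DL u v = DL v u.
Proof. unfold DL. rewrite gd_sym. auto. Qed.
Lemma DL_tri u v w : DL u w <= DL u v + DL v w.
Proof. unfold DL. rewrite <- Rmult_plus_distr_l. apply Rmult_le_compat_l; [lra|].
  rewrite <- plus_INR. apply le_INR. apply gd_tri. Qed.
Lemma DL_adj u v : adj u v -> DL u v <= len.
Proof. intro H. unfold DL. rewrite <- (Rmult_1_r len) at 2. apply Rmult_le_compat_l; [lra|].
  change 1 with (INR 1). apply le_INR. apply gd_adj; auto. Qed.
Lemma DL_neq u v : u <> v -> len <= DL u v.
Proof. intro H. unfold DL. rewrite <- (Rmult_1_r len) at 1. apply Rmult_le_compat_l; [lra|].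
  change 1 with (INR 1). apply le_INR. destruct (gdist adj u v) eqn:E; [|lia].
  apply gd_zero in E. congruence. Qed.
Lemma DL_lt u v : DL u v < len -> u = v.
Proof. intro H. destruct (classic (u = v)); auto. apply DL_neq in H0. lra. Qed.
Lemma DL_walk u v m : walk adj m u v -> DL u v <= len * INR m.
Proof. intro H. unfold DL. apply Rmult_le_compat_l; [lra|]. apply le_INR. apply gd_le; auto. Qed.

Definition valid := is_mpoint adj len.
Definition md := mdist adj len.
Definition AT (p : mpoint V) (v : V) (tau : R) :=
  (mp_a p = v /\ mp_t p = tau) \/ (mp_b p = v /\ mp_t p = len - tau).

Lemma md_br1 a b t s : md (MPoint a b t) (MPoint a b s) = Rabs (t - s).
Proof. unfold md, mdist; simpl. destruct (excluded_middle_informative (a = a /\ b = b)); tauto. Qed.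

Lemma md_br2 a b t s : a <> b -> md (MPoint a b t) (MPoint b a s) = Rabs (t - (len - s)).
Proof. intro H. unfold md, mdist; simpl.
  destruct (excluded_middle_informative (a = b /\ b = a)) as [[]|]; [congruence|].
  destruct (excluded_middle_informative (a = a /\ b = b)); tauto. Qed.

Lemma md_br3 a b t c e s : ~ (a = c /\ b = e) -> ~ (a = e /\ b = c) ->
  md (MPoint a b t) (MPoint c e s) =
  Rmin (Rmin (t + DL a c + s) (t + DL a e + (len - s)))
       (Rmin (len - t + DL b c + s) (len - t + DL b e + (len - s))).
Proof. intros H1 H2. unfold md, mdist, route, DL; simpl.
  destruct (excluded_middle_informative (a = c /\ b = e)); [tauto|].
  destruct (excluded_middle_informative (a = e /\ b = c)); [tauto|]. reflexivity. Qed.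



Ltac dlcase := repeat match goal with |- context [DL ?x ?y] =>
  let H := fresh in destruct (classic (x = y)) as [H|H];
  [subst; rewrite ?DL_refl | pose proof (DL_neq _ _ H); pose proof (DL_nn x y);
     generalize dependent (DL x y); intros] end.

Lemma adj_neq a b : adj a b -> a <> b.
Proof. intros H E; subst; eapply Hirr; eauto. Qed.

Lemma md_AT p q a c tau sig : valid p -> valid q -> AT p a tau -> AT q c sig ->
  md p q <= tau + DL a c + sig.
Proof.
  destruct p as [pa pb t], q as [qa qb s]; unfold valid, is_mpoint, AT; simpl.
  intros [Hp Ht] [Hq Hs] HA HC.
  pose proof (adj_neq _ _ Hp). pose proof (adj_neq _ _ Hq).
  destruct (classic (pa = qa /\ pb = qb)) as [[E1 E2]|N1].
  { subst. rewrite md_br1. destruct HA as [[? ?]|[? ?]]; destruct HC as [[? ?]|[? ?]]; subst;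
    dlcase; try congruence; rsolve. }
  destruct (classic (pa = qb /\ pb = qa)) as [[E1 E2]|N2].
  { subst. rewrite md_br2 by auto. destruct HA as [[? ?]|[? ?]]; destruct HC as [[? ?]|[? ?]]; subst;
    dlcase; try congruence; rsolve. }
  rewrite md_br3 by auto.
  destruct HA as [[? ?]|[? ?]]; destruct HC as [[? ?]|[? ?]]; subst; rsolve.
Qed.

Lemma md_sym p q : valid p -> valid q -> md p q = md q p.
Proof.
  destruct p as [pa pb t], q as [qa qb s]; unfold valid, is_mpoint; simpl.
  intros [Hp Ht] [Hq Hs].
  pose proof (adj_neq _ _ Hp). pose proof (adj_neq _ _ Hq).
  destruct (classic (pa = qa /\ pb = qb)) as [[E1 E2]|N1].
  { subst. rewrite !md_br1. rsolve. }
  destruct (classic (pa = qb /\ pb = qa)) as [[E1 E2]|N2].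
  { subst. rewrite !md_br2 by auto. rsolve. }
  rewrite !md_br3 by (intros [? ?]; subst; tauto).
  rewrite (DL_sym qa pa), (DL_sym qa pb), (DL_sym qb pa), (DL_sym qb pb). rsolve.
Qed.

Lemma md_nn p q : valid p -> valid q -> 0 <= md p q.
Proof.
  destruct p as [pa pb t], q as [qa qb s]; unfold valid, is_mpoint; simpl.
  intros [Hp Ht] [Hq Hs].
  destruct (classic (pa = qa /\ pb = qb)) as [[E1 E2]|N1].
  { subst. rewrite !md_br1. apply Rabs_pos. }
  destruct (classic (pa = qb /\ pb = qa)) as [[E1 E2]|N2].
  { subst. rewrite !md_br2 by (apply adj_neq; auto). apply Rabs_pos. }
  rewrite !md_br3 by (intros [? ?]; subst; tauto).
  pose proof (DL_nn pa qa); pose proof (DL_nn pa qb); pose proof (DL_nn pb qa); pose proof (DL_nn pb qb).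
  rsolve.
Qed.

Lemma md_self p : md p p = 0.
Proof. destruct p. rewrite md_br1. rewrite Rminus_diag. apply Rabs_R0. Qed.

Definition rho (p : mpoint V) (v : V) : R :=
  Rmin (mp_t p + DL (mp_a p) v) (len - mp_t p + DL (mp_b p) v).

Lemma rho_nn p v : valid p -> 0 <= rho p v.
Proof. destruct p as [a b t]; unfold valid, is_mpoint, rho; simpl. intros [_ Ht].
  pose proof (DL_nn a v); pose proof (DL_nn b v); rsolve. Qed.

Lemma LIP p q v : valid p -> valid q -> rho q v <= md p q + rho p v.
Proof.
  destruct p as [pa pb t], q as [qa qb s]; unfold valid, is_mpoint, rho; simpl.
  intros [Hp Ht] [Hq Hs].
  pose proof (adj_neq _ _ Hp). pose proof (adj_neq _ _ Hq).
  destruct (classic (pa = qa /\ pb = qb)) as [[E1 E2]|N1].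
  { subst. rewrite !md_br1. rsolve. }
  destruct (classic (pa = qb /\ pb = qa)) as [[E1 E2]|N2].
  { subst. rewrite !md_br2 by auto. rsolve. }
  rewrite !md_br3 by (intros [? ?]; subst; tauto).
  pose proof (DL_tri qa pa v); pose proof (DL_tri qa pb v);
  pose proof (DL_tri qb pa v); pose proof (DL_tri qb pb v).
  pose proof (DL_tri pa pb v); pose proof (DL_tri pb pa v).
  pose proof (DL_adj _ _ Hp); pose proof (DL_adj _ _ (Hsym _ _ Hp)).
  rewrite (DL_sym qa pa), (DL_sym qa pb), (DL_sym qb pa), (DL_sym qb pb) in *.
  pose proof (DL_nn pa qa); pose proof (DL_nn pa qb); pose proof (DL_nn pb qa); pose proof (DL_nn pb qb).
  rsolve.
Qed.


Definition RT (p r : mpoint V) : R :=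
  Rmin (rho p (mp_a r) + mp_t r) (rho p (mp_b r) + (len - mp_t r)).

Lemma md_le_RT p r : valid p -> valid r -> md p r <= RT p r.
Proof.
  intros Hp Hr. destruct p as [pa pb t], r as [ra rb s]. unfold RT, rho; simpl.
  assert (A1 : AT (MPoint pa pb t) pa t) by (left; simpl; auto).
  assert (A2 : AT (MPoint pa pb t) pb (len - t)) by (right; simpl; split; auto; ring).
  assert (C1 : AT (MPoint ra rb s) ra s) by (left; simpl; auto).
  assert (C2 : AT (MPoint ra rb s) rb (len - s)) by (right; simpl; split; auto; ring).
  pose proof (md_AT _ _ _ _ _ _ Hp Hr A1 C1). pose proof (md_AT _ _ _ _ _ _ Hp Hr A1 C2).
  pose proof (md_AT _ _ _ _ _ _ Hp Hr A2 C1). pose proof (md_AT _ _ _ _ _ _ Hp Hr A2 C2).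
  rsolve.
Qed.

Lemma md_eq_RT pa pb t ra rb s : ~ (pa = ra /\ pb = rb) -> ~ (pa = rb /\ pb = ra) ->
  md (MPoint pa pb t) (MPoint ra rb s) = RT (MPoint pa pb t) (MPoint ra rb s).
Proof. intros. rewrite md_br3 by auto. unfold RT, rho; simpl. rsolve. Qed.

Lemma tri_aux p q r : valid p -> valid q -> valid r ->
  ~ (mp_a q = mp_a r /\ mp_b q = mp_b r) -> ~ (mp_a q = mp_b r /\ mp_b q = mp_a r) ->
  md p r <= md p q + md q r.
Proof.
  intros Hp Hq Hr N1 N2.
  pose proof (md_le_RT _ _ Hp Hr).
  destruct q as [qa qb s0], r as [ra rb s]. simpl in *.
  rewrite md_eq_RT by auto.
  pose proof (LIP _ _ ra Hq Hp). pose proof (LIP _ _ rb Hq Hp).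
  rewrite (md_sym _ _ Hq Hp) in *.
  unfold RT in *; simpl in *. rsolve.
Qed.

Lemma md_tri p q r : valid p -> valid q -> valid r -> md p r <= md p q + md q r.
Proof.
  intros Hp Hq Hr.
  destruct (classic (~ (mp_a q = mp_a r /\ mp_b q = mp_b r) /\ ~ (mp_a q = mp_b r /\ mp_b q = mp_a r))) as [[N1 N2]|N].
  { apply tri_aux; auto. }
  destruct (classic (~ (mp_a q = mp_a p /\ mp_b q = mp_b p) /\ ~ (mp_a q = mp_b p /\ mp_b q = mp_a p))) as [[N1 N2]|N'].
  { rewrite (md_sym p r), (md_sym p q), (md_sym q r) by auto. rewrite Rplus_comm. apply tri_aux; auto. }
  destruct p as [pa pb t], q as [qa qb u], r as [ra rb s]; simpl in *.
  destruct Hp as [Hp Ht], Hq as [Hq Hu], Hr as [Hr Hs]; simpl in *.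
  pose proof (adj_neq _ _ Hp). pose proof (adj_neq _ _ Hq). pose proof (adj_neq _ _ Hr).
  apply not_and_or in N; apply not_and_or in N'.
  destruct N as [N|N]; apply NNPP in N; destruct N' as [N'|N']; apply NNPP in N';
  destruct N as [? ?], N' as [? ?]; subst;
  repeat first [rewrite md_br1 | rewrite md_br2 by auto]; rsolve.
Qed.



Lemma nearV0 e f q : valid (MPoint e f 0) -> valid q -> md (MPoint e f 0) q < len ->
  AT q e (md (MPoint e f 0) q).
Proof.
  intros Hx Hq Hlt. destruct q as [qa qb s]. unfold AT; simpl.
  destruct Hx as [Hx Ht], Hq as [Hq Hs]; simpl in *.
  pose proof (adj_neq _ _ Hx). pose proof (adj_neq _ _ Hq).
  destruct (classic (e = qa /\ f = qb)) as [[E1 E2]|N1].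
  { subst. rewrite md_br1 in *. left; split; auto. rsolve. }
  destruct (classic (e = qb /\ f = qa)) as [[E1 E2]|N2].
  { subst. rewrite md_br2 in * by auto. right; split; auto. rsolve. }
  rewrite md_br3 in * by auto.
  pose proof (DL_nn e qa); pose proof (DL_nn e qb); pose proof (DL_nn f qa); pose proof (DL_nn f qb).
  destruct (classic (e = qa)) as [E|E].
  { subst. rewrite DL_refl in *. pose proof (DL_neq _ _ (adj_neq _ _ Hq)). left; split; auto. rsolve. }
  destruct (classic (e = qb)) as [E'|E'].
  { subst. rewrite DL_refl in *. pose proof (DL_neq _ _ (adj_neq _ _ (Hsym _ _ Hq))). right; split; auto. rsolve. }
  pose proof (DL_neq _ _ E). pose proof (DL_neq _ _ E'). exfalso. rsolve.
Qed.

Lemma md_zero_trans p p' q : valid p -> valid p' -> valid q -> md p p' = 0 -> md p q = md p' q.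
Proof.
  intros Hp Hp' Hq H0. pose proof (md_tri _ _ _ Hp Hp' Hq). pose proof (md_tri _ _ _ Hp' Hp Hq).
  rewrite (md_sym p' p) in * by auto. lra.
Qed.

Lemma nearV x e q : valid x -> valid q -> AT x e 0 -> md x q < len -> AT q e (md x q).
Proof.
  intros Hx Hq HA Hlt. destruct x as [xa xb t].
  destruct HA as [[E1 E2]|[E1 E2]]; simpl in *; subst.
  - apply nearV0; auto.
  - assert (Hx' : valid (MPoint e xa 0)).
    { destruct Hx as [Ha Ht]; split; simpl in *; auto. lra. }
    assert (Z : md (MPoint xa e (len - 0)) (MPoint e xa 0) = 0).
    { destruct Hx. rewrite md_br2 by (apply adj_neq; auto). rewrite <- (Rabs_R0). f_equal. ring. }
    rewrite (md_zero_trans _ _ _ Hx Hx' Hq Z) in *. apply nearV0; auto.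
Qed.

Lemma nearM a b q : valid (MPoint a b (len/2)) -> valid q -> md (MPoint a b (len/2)) q <= len/2 ->
  (mp_a q = a /\ mp_b q = b) \/ (mp_a q = b /\ mp_b q = a) \/
  (md (MPoint a b (len/2)) q = len/2 /\ (AT q a 0 \/ AT q b 0)).
Proof.
  intros Hx Hq Hle. destruct q as [qa qb s]. unfold AT; simpl.
  destruct Hx as [Hx Ht], Hq as [Hq Hs]; simpl in *.
  destruct (classic (a = qa /\ b = qb)) as [[E1 E2]|N1]; [subst; auto|].
  destruct (classic (a = qb /\ b = qa)) as [[E1 E2]|N2]; [subst; auto|].
  right; right.
  rewrite md_br3 in * by auto.
  pose proof (DL_nn a qa); pose proof (DL_nn a qb); pose proof (DL_nn b qa); pose proof (DL_nn b qb).
  assert (Ev : Rmin (Rmin (len / 2 + DL a qa + s) (len / 2 + DL a qb + (len - s)))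
    (Rmin (len - len / 2 + DL b qa + s) (len - len / 2 + DL b qb + (len - s))) = len/2) by rsolve.
  split; auto.
  destruct (Rmin_case_eq _ _ _ Ev) as [F|F]; destruct (Rmin_case_eq _ _ _ F) as [G|G].
  - assert (DL a qa < len) by lra. apply DL_lt in H3. subst. left; left; split; auto; lra.
  - assert (DL a qb < len) by lra. apply DL_lt in H3. subst. left; right; split; auto; lra.
  - assert (DL b qa < len) by lra. apply DL_lt in H3. subst. right; left; split; auto; lra.
  - assert (DL b qb < len) by lra. apply DL_lt in H3. subst. right; right; split; auto; lra.
Qed.

End Gen.

Set Implicit Arguments.
Unset Strict Implicit.

Lemma vpair_eq (V : Type) (a b c d : V) : vpair a b = vpair c d -> (a = c /\ b = d) \/ (a = d /\ b = c).
Proof.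
  intro H. unfold vpair in H.
  assert (Ha : a = c \/ a = d) by (rewrite <- (f_equal (fun P => P a) H); auto).
  assert (Hb : b = c \/ b = d) by (rewrite <- (f_equal (fun P => P b) H); auto).
  assert (Hc : c = a \/ c = b) by (rewrite (f_equal (fun P => P c) H); auto).
  assert (Hd : d = a \/ d = b) by (rewrite (f_equal (fun P => P d) H); auto).
  destruct Ha, Hb, Hc, Hd; subst; auto.
Qed.

Lemma vpair_comm (V : Type) (a b : V) : vpair a b = vpair b a.
Proof. unfold vpair. apply functional_extensionality; intro z. apply propositional_extensionality. tauto. Qed.

Section LG.
Variables (V : Type) (adj : V -> V -> Prop) (k : R).
Hypothesis Hs : forall u v, adj u v -> adj v u.
Hypothesis Hi : forall u, ~ adj u u.
Hypothesis Hc : connected adj.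
Hypothesis Hk : 0 < k.

Local Notation LV := (ledge adj).
Local Notation LA := (@ladj V adj).
Local Notation mdG := (md V adj k).
Local Notation mdL := (md LV LA k).
Local Notation vG := (valid V adj k).
Local Notation vL := (valid LV LA k).
Local Notation DG := (DL V adj k).
Local Notation DLL := (DL LV LA k).

Lemma llen_k : llen k = k.
Proof. unfold llen; field. Qed.

Lemma ledge_eq (e f : LV) : proj1_sig e = proj1_sig f -> e = f.
Proof. destruct e as [se pe], f as [sf pf]; simpl; intro; subst. f_equal. apply proof_irrelevance. Qed.

Definition mkedge (a b : V) (H : adj a b) : LV :=
  exist _ (vpair a b) (ex_intro _ a (ex_intro _ b (conj H eq_refl))).

Lemma ledge_dest (e : LV) : exists a b, adj a b /\ proj1_sig e = vpair a b.
Proof. destruct e as [s [a [b [H E]]]]; simpl; eauto. Qed.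

Lemma LA_sym : forall e f : LV, LA e f -> LA f e.
Proof. intros e f [H [x [H1 H2]]]. split; eauto. Qed.

Lemma LA_irr : forall e : LV, ~ LA e e.
Proof. intros e [H _]; auto. Qed.

Lemma edge_adj (w : LV) z a : proj1_sig w z -> proj1_sig w a -> z <> a -> adj z a.
Proof.
  destruct (ledge_dest w) as [p [q [Hpq E]]]. rewrite E. unfold vpair.
  intros [->| ->] [->| ->] N; try congruence; auto.
Qed.

Lemma W1 : forall m a c, walk adj m a c -> forall e g : LV, proj1_sig e a -> proj1_sig g c ->
  exists n, (n <= S m)%nat /\ walk LA n e g.
Proof.
  induction 1 as [u | m u w v Huw Hw IH]; intros e g Ha Hcc.
  - destruct (classic (e = g)) as [E|E].
    + subst; exists 0%nat; split; [lia|constructor].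
    + exists 1%nat; split; [lia|]. apply (walkS e (w:=g)); [split; [auto| exists u; split; auto] | constructor].
  - destruct (IH (mkedge Huw) g) as [n' [Hn' Hw']]; auto.
    { simpl; unfold vpair; auto. }
    destruct (classic (e = mkedge Huw)) as [E|E].
    + subst; exists n'; split; [lia|auto].
    + exists (S n'); split; [lia|]. econstructor; [|eauto]. split; auto. exists u; split; auto. simpl; unfold vpair; auto.
Qed.

Lemma Lconn : connected LA.
Proof.
  intros e g. destruct (ledge_dest e) as [a [b [_ Ea]]], (ledge_dest g) as [c [d [_ Ec]]].
  destruct (Hc a c) as [m Hm].
  destruct (W1 Hm (e:=e) (g:=g)) as [n [_ Hn]]; eauto.
  rewrite Ea; unfold vpair; auto. rewrite Ec; unfold vpair; auto.
Qed.

Lemma W1R (e g : LV) a c : proj1_sig e a -> proj1_sig g c -> DLL e g <= k + DG a c.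
Proof.
  intros Ha Hcc. destruct (gd_spec V adj k Hs Hi Hc Hk a c) as [W _].
  destruct (W1 W Ha Hcc) as [n [Hn Wn]].
  pose proof (DL_walk LV LA k LA_sym LA_irr Lconn Hk _ _ _ Wn).
  unfold DL at 2. apply le_INR in Hn. rewrite S_INR in Hn.
  assert (k * INR n <= k * (INR (gdist adj a c) + 1)) by (apply Rmult_le_compat_l; lra).
  lra.
Qed.

Lemma W2 : forall n (e g : LV), walk LA n e g -> (1 <= n)%nat ->
  exists a c m, proj1_sig e a /\ proj1_sig g c /\ walk adj m a c /\ (S m <= n)%nat.
Proof.
  induction 1 as [u | n e w g Hew Hw IH]; intros Hn; [lia|].
  destruct Hew as [Hne [z [Hze Hzw]]].
  destruct n.
  - inversion Hw; subst. exists z, z, 0%nat. repeat split; auto. constructor.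
  - destruct IH as [a' [c [m [Ha' [Hcc [Hm Hle]]]]]]; [lia|].
    destruct (classic (a' = z)) as [E|E].
    + subst. exists z, c, m. repeat split; auto.
    + exists z, c, (S m). repeat split; auto; [|lia].
      econstructor; [|eauto]. apply edge_adj with w; auto.
Qed.

Lemma W2R (e g : LV) : e <> g -> exists a c, proj1_sig e a /\ proj1_sig g c /\ k + DG a c <= DLL e g.
Proof.
  intro N. destruct (gd_spec LV LA k LA_sym LA_irr Lconn Hk e g) as [W _].
  destruct (gdist LA e g) eqn:G0.
  - apply (gd_zero LV LA k LA_sym LA_irr Lconn Hk) in G0. congruence.
  - destruct (W2 W) as [a [c [m [Ha [Hcc [Wm Hle]]]]]]; [lia|].
    exists a, c. repeat split; auto.
    pose proof (DL_walk V adj k Hs Hi Hc Hk _ _ _ Wm).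
    unfold DL at 2. rewrite G0. apply le_INR in Hle. rewrite S_INR in Hle.
    assert (k * (INR m + 1) <= k * INR (S n)) by (apply Rmult_le_compat_l; lra).
    lra.
Qed.


Let mdAT_G := md_AT V adj k Hs Hi Hc Hk.
Let mdnn_G := md_nn V adj k Hs Hi Hc Hk.
Let mdsym_G := md_sym V adj k Hs Hi Hc Hk.
Let mdtri_G := md_tri V adj k Hs Hi Hc Hk.
Let aneq_G := adj_neq V adj k Hs Hi Hc Hk.
Let aneq_L := adj_neq LV LA k LA_sym LA_irr Lconn Hk.
Let DLrefl_G := DL_refl V adj k Hs Hi Hc Hk.
Let DLnn_G := DL_nn V adj k Hs Hi Hc Hk.
Let DLnn_L := DL_nn LV LA k LA_sym LA_irr Lconn Hk.
Let br1_G := md_br1 V adj k Hs Hi Hc Hk.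
Let br2_G := md_br2 V adj k Hs Hi Hc Hk.
Let br3_G := md_br3 V adj k Hs Hi Hc Hk.
Let self_G := md_self V adj k Hs Hi Hc Hk.
Let LIP_G := LIP V adj k Hs Hi Hc Hk.
Let DLtri_G := DL_tri V adj k Hs Hi Hc Hk.
Let DLsym_G := DL_sym V adj k Hs Hi Hc Hk.
Let DLadj_G := DL_adj V adj k Hs Hi Hc Hk.
Let DLneq_G := DL_neq V adj k Hs Hi Hc Hk.
Let br1_L := md_br1 LV LA k LA_sym LA_irr Lconn Hk.
Let br2_L := md_br2 LV LA k LA_sym LA_irr Lconn Hk.
Let br3_L := md_br3 LV LA k LA_sym LA_irr Lconn Hk.
Let mdAT_L := md_AT LV LA k LA_sym LA_irr Lconn Hk.
Let mdnn_L := md_nn LV LA k LA_sym LA_irr Lconn Hk.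
Let mdsym_L := md_sym LV LA k LA_sym LA_irr Lconn Hk.
Let mdtri_L := md_tri LV LA k LA_sym LA_irr Lconn Hk.
Let self_L := md_self LV LA k LA_sym LA_irr Lconn Hk.
Let DLrefl_L := DL_refl LV LA k LA_sym LA_irr Lconn Hk.
Let nearV_L := nearV LV LA k LA_sym LA_irr Lconn Hk.
Let nearM_L := nearM LV LA k LA_sym LA_irr Lconn Hk.

Lemma edge_other (e : LV) z : proj1_sig e z -> exists o, proj1_sig e = vpair z o /\ adj z o.
Proof.
  intro H. destruct (ledge_dest e) as [a [b [Hab Ea]]]. rewrite Ea in H.
  destruct H as [H|H]; subst z.
  - exists b; auto.
  - exists a; split; [rewrite Ea; apply vpair_comm | apply Hs; auto].
Qed.

Lemma cd_ex (e f : LV) : LA e f -> exists x ye yf,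
  proj1_sig e = vpair x ye /\ proj1_sig f = vpair x yf /\ adj x ye /\ adj x yf.
Proof.
  intros [Hne [z [Hze Hzf]]].
  destruct (edge_other Hze) as [o1 [E1 A1]], (edge_other Hzf) as [o2 [E2 A2]].
  exists z, o1, o2; auto.
Qed.

Lemma cd_spec (e f : LV) x ye yf : LA e f -> common_data e f = (x, ye, yf) ->
  proj1_sig e = vpair x ye /\ proj1_sig f = vpair x yf /\ adj x ye /\ adj x yf.
Proof.
  intros H E. unfold common_data in E.
  match type of E with epsilon ?i ?P = _ => assert (HP : P (epsilon i P)) end.
  { apply epsilon_spec. destruct (cd_ex H) as (x' & y1 & y2 & Hsp). exists (x', y1, y2). exact Hsp. }
  rewrite E in HP. exact HP.
Qed.

Lemma cd_uniq (e f : LV) x ye yf x' ye' yf' : LA e f ->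
  proj1_sig e = vpair x ye -> proj1_sig f = vpair x yf -> adj x ye -> adj x yf ->
  proj1_sig e = vpair x' ye' -> proj1_sig f = vpair x' yf' -> adj x' ye' -> adj x' yf' ->
  x = x' /\ ye = ye' /\ yf = yf'.
Proof.
  intros [Hne _] E1 F1 A1 B1 E2 F2 A2 B2.
  rewrite E1 in E2. rewrite F1 in F2.
  destruct (vpair_eq E2) as [[? ?]|[? ?]], (vpair_eq F2) as [[? ?]|[? ?]]; subst; auto;
  try (exfalso; eapply Hi; eassumption); try (exfalso; apply Hne; apply ledge_eq; congruence).
Qed.

Lemma cd_rev (e f : LV) x ye yf : LA e f -> common_data e f = (x, ye, yf) -> common_data f e = (x, yf, ye).
Proof.
  intros H E. destruct (common_data f e) as [[x' a'] b'] eqn:E'.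
  destruct (cd_spec H E) as (E1 & F1 & A1 & B1).
  destruct (cd_spec (LA_sym H) E') as (F2 & E2 & A2 & B2).
  destruct (cd_uniq H E1 F1 A1 B1 E2 F2 B2 A2) as (-> & -> & ->). reflexivity.
Qed.

Lemma hmap_eq (e f : LV) t x ye yf : common_data e f = (x, ye, yf) ->
  hmap k (MPoint e f t) = if Rle_dec t (k/2) then MPoint x ye (k/2 - t) else MPoint x yf (k/2 - (k - t)).
Proof. intro E. unfold hmap; simpl. rewrite E. rewrite llen_k. reflexivity. Qed.

Lemma HV p : vL p -> vG (hmap k p).
Proof.
  destruct p as [e f t]; intros [H Ht]; simpl in *.
  destruct (common_data e f) as [[x ye] yf] eqn:E.
  destruct (cd_spec H E) as (_ & _ & A1 & B1).
  rewrite (hmap_eq t E). destruct Rle_dec; split; simpl; auto; lra.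
Qed.

Lemma PAIR a b c d u v : vpair a b = vpair c d -> adj a b ->
  mdG (MPoint a b u) (MPoint c d v) = Rabs (u - v) \/ mdG (MPoint a b u) (MPoint c d v) = Rabs (u - (k - v)).
Proof.
  intros E H. destruct (vpair_eq E) as [[? ?]|[? ?]]; subst.
  - left; apply br1_G.
  - right; apply br2_G; apply aneq_G; auto.
Qed.

Lemma mem_pair (x y z z' : V) : vpair x y = vpair z z' -> x = z \/ x = z'.
Proof. intro E. destruct (vpair_eq E) as [[? ?]|[? ?]]; auto. Qed.

Lemma AT_half (x z z' : V) : x = z \/ x = z' -> AT V k (MPoint z z' (k/2)) x (k/2).
Proof. intros [->| ->]; [left|right]; simpl; split; auto; field. Qed.

Lemma AT_mem (e : LV) z z' a : proj1_sig e = vpair z z' -> proj1_sig e a -> a = z \/ a = z'.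
Proof. intros E H; rewrite E in H; exact H. Qed.

Lemma vhalf z z' : adj z z' -> vG (MPoint z z' (k/2)).
Proof. intro; split; simpl; auto; lra. Qed.

Lemma HM p e tau z z' : vL p -> AT LV k p e tau -> proj1_sig e = vpair z z' -> adj z z' ->
  mdG (hmap k p) (MPoint z z' (k/2)) <= tau.
Proof.
  destruct p as [pa pb t]; intros [Hp Ht] HA Ee Hz; simpl in *.
  destruct (common_data pa pb) as [[x ya] yb] eqn:E.
  destruct (cd_spec Hp E) as (E1 & E2 & A1 & A2).
  rewrite (hmap_eq t E).
  destruct HA as [[Ha Hta]|[Hb Htb]]; simpl in *; subst.
  - assert (P : vpair x ya = vpair z z') by congruence.
    destruct Rle_dec.
    + destruct (PAIR (k/2 - tau) (k/2) P A1) as [-> | ->]; rsolve.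
    + assert (vG (MPoint x yb (k / 2 - (k - tau)))) by (split; simpl; auto; lra).
      pose proof (mdAT_G H (vhalf Hz) (or_introl (conj eq_refl eq_refl))
        (AT_half (mem_pair P))).
      rewrite DLrefl_G in H0; simpl in H0; lra.
  - assert (P : vpair x yb = vpair z z') by congruence.
    destruct Rle_dec.
    + assert (vG (MPoint x ya (k / 2 - (k - tau)))) by (split; simpl; auto; lra).
      pose proof (mdAT_G H (vhalf Hz) (or_introl (conj eq_refl eq_refl))
        (AT_half (mem_pair P))).
      rewrite DLrefl_G in H0; simpl in H0; lra.
    + destruct (PAIR (k / 2 - (k - (k - tau))) (k/2) P A2) as [-> | ->]; rsolve.
Qed.


Lemma HAT q e sg : vL q -> AT LV k q e sg -> 0 <= sg <= k/2 ->
  exists z z', proj1_sig e = vpair z z' /\ adj z z' /\ mdG (hmap k q) (MPoint z z' (k/2 - sg)) = 0.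
Proof.
  destruct q as [qa qb s]; intros [Hq Hsb] HA Hsg; simpl in *.
  destruct (common_data qa qb) as [[x ya] yb] eqn:E.
  destruct (cd_spec Hq E) as (E1 & E2 & A1 & A2).
  rewrite (hmap_eq s E).
  destruct HA as [[Ha Hta]|[Hb Htb]]; simpl in *; subst.
  - exists x, ya. repeat split; auto. destruct Rle_dec; [apply self_G | lra].
  - exists x, yb. repeat split; auto. destruct Rle_dec.
    + assert (Z1: vG (MPoint x ya (k/2 - (k - sg)))) by (split; simpl; auto; lra).
      assert (Z2: vG (MPoint x yb (k/2 - sg))) by (split; simpl; auto; lra).
      pose proof (mdAT_G Z1 Z2 (or_introl (conj eq_refl eq_refl)) (or_introl (conj eq_refl eq_refl))).
      pose proof (mdnn_G Z1 Z2). rewrite DLrefl_G in H; simpl in H. lra.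
    + rewrite br1_G. rsolve.
Qed.

Lemma PMUB (A C : LV) z z' w w' : proj1_sig A = vpair z z' -> adj z z' ->
  proj1_sig C = vpair w w' -> adj w w' ->
  mdG (MPoint z z' (k/2)) (MPoint w w' (k/2)) <= DLL A C.
Proof.
  intros EA Az EC Aw. destruct (classic (A = C)) as [->|N].
  - rewrite DLrefl_L. assert (P : vpair z z' = vpair w w') by congruence.
    destruct (PAIR (k/2) (k/2) P Az) as [-> | ->]; rsolve.
  - destruct (W2R N) as (a & c & Ha & Hcc & Hle).
    pose proof (mdAT_G (vhalf Az) (vhalf Aw) (AT_half (AT_mem EA Ha)) (AT_half (AT_mem EC Hcc))). lra.
Qed.

Lemma PMLB (A C : LV) z z' w w' : proj1_sig A = vpair z z' -> adj z z' ->
  proj1_sig C = vpair w w' -> adj w w' ->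
  DLL A C <= mdG (MPoint z z' (k/2)) (MPoint w w' (k/2)).
Proof.
  intros EA Az EC Aw.
  destruct (classic (z = w /\ z' = w')) as [[? ?]|N1].
  { subst. assert (A = C) by (apply ledge_eq; congruence). subst. rewrite DLrefl_L.
    apply mdnn_G; apply vhalf; auto. }
  destruct (classic (z = w' /\ z' = w)) as [[? ?]|N2].
  { subst. assert (A = C) by (apply ledge_eq; rewrite EA, EC; apply vpair_comm). subst. rewrite DLrefl_L.
    apply mdnn_G; apply vhalf; auto. }
  rewrite br3_G by auto.
  assert (Hz : proj1_sig A z) by (rewrite EA; left; auto).
  assert (Hz' : proj1_sig A z') by (rewrite EA; right; auto).
  assert (Hw : proj1_sig C w) by (rewrite EC; left; auto).
  assert (Hw' : proj1_sig C w') by (rewrite EC; right; auto).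
  pose proof (W1R Hz Hw). pose proof (W1R Hz Hw'). pose proof (W1R Hz' Hw). pose proof (W1R Hz' Hw').
  rsolve.
Qed.

Lemma RTUB p q (A C : LV) tau sg : vL p -> vL q -> AT LV k p A tau -> AT LV k q C sg ->
  mdG (hmap k p) (hmap k q) <= tau + DLL A C + sg.
Proof.
  intros Hp Hq HA HC.
  destruct (ledge_dest A) as [z [z' [Az EA]]], (ledge_dest C) as [w [w' [Aw EC]]].
  pose proof (HM Hp HA EA Az). pose proof (HM Hq HC EC Aw).
  pose proof (PMUB EA Az EC Aw).
  pose proof (HV Hp) as V1. pose proof (HV Hq) as V2.
  pose proof (vhalf Az) as V3. pose proof (vhalf Aw) as V4.
  pose proof (mdtri_G V1 V3 V2). pose proof (mdtri_G V3 V4 V2).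
  rewrite (mdsym_G V4 V2) in *. lra.
Qed.

Lemma HLIP p q : vL p -> vL q -> mdG (hmap k p) (hmap k q) <= mdL p q.
Proof.
  intros Hp Hq. pose proof Hp as Hp0; pose proof Hq as Hq0.
  destruct p as [pa pb t], q as [qa qb s]; destruct Hp as [Hp Ht], Hq as [Hq Hs0]; simpl in *.
  destruct (common_data pa pb) as [[x ya] yb] eqn:E.
  destruct (cd_spec Hp E) as (E1 & E2 & A1 & A2).
  destruct (classic (pa = qa /\ pb = qb)) as [[? ?]|N1].
  { subst. rewrite br1_L. rewrite !(hmap_eq _ E).
    destruct (Rle_dec t (k/2)); destruct (Rle_dec s (k/2)); try (rewrite br1_G; rsolve).
    - assert (Z1: vG (MPoint x ya (k/2 - t))) by (split; simpl; auto; lra).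
      assert (Z2: vG (MPoint x yb (k/2 - (k - s)))) by (split; simpl; auto; lra).
      pose proof (mdAT_G Z1 Z2 (or_introl (conj eq_refl eq_refl)) (or_introl (conj eq_refl eq_refl))).
      rewrite DLrefl_G in H; simpl in H. rsolve.
    - assert (Z1: vG (MPoint x yb (k/2 - (k - t)))) by (split; simpl; auto; lra).
      assert (Z2: vG (MPoint x ya (k/2 - s))) by (split; simpl; auto; lra).
      pose proof (mdAT_G Z1 Z2 (or_introl (conj eq_refl eq_refl)) (or_introl (conj eq_refl eq_refl))).
      rewrite DLrefl_G in H; simpl in H. rsolve. }
  destruct (classic (pa = qb /\ pb = qa)) as [[? ?]|N2].
  { subst. rewrite br2_L by (apply aneq_L; auto).
    pose proof (cd_rev Hp E) as E'.
    rewrite (hmap_eq _ E), (hmap_eq _ E').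
    destruct (Rle_dec t (k/2)); destruct (Rle_dec s (k/2)); try (rewrite br1_G; rsolve).
    - assert (Z1: vG (MPoint x ya (k/2 - t))) by (split; simpl; auto; lra).
      assert (Z2: vG (MPoint x yb (k/2 - s))) by (split; simpl; auto; lra).
      pose proof (mdAT_G Z1 Z2 (or_introl (conj eq_refl eq_refl)) (or_introl (conj eq_refl eq_refl))).
      rewrite DLrefl_G in H; simpl in H. rsolve.
    - assert (Z1: vG (MPoint x yb (k/2 - (k - t)))) by (split; simpl; auto; lra).
      assert (Z2: vG (MPoint x ya (k/2 - (k - s)))) by (split; simpl; auto; lra).
      pose proof (mdAT_G Z1 Z2 (or_introl (conj eq_refl eq_refl)) (or_introl (conj eq_refl eq_refl))).
      rewrite DLrefl_G in H; simpl in H. rsolve. }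
  rewrite br3_L by auto.
  assert (P1 : AT LV k (MPoint pa pb t) pa t) by (left; simpl; auto).
  assert (P2 : AT LV k (MPoint pa pb t) pb (k - t)) by (right; simpl; split; auto; ring).
  assert (Q1 : AT LV k (MPoint qa qb s) qa s) by (left; simpl; auto).
  assert (Q2 : AT LV k (MPoint qa qb s) qb (k - s)) by (right; simpl; split; auto; ring).
  pose proof (RTUB Hp0 Hq0 P1 Q1). pose proof (RTUB Hp0 Hq0 P1 Q2).
  pose proof (RTUB Hp0 Hq0 P2 Q1). pose proof (RTUB Hp0 Hq0 P2 Q2).
  rsolve.
Qed.


Lemma vzero z z' : adj z z' -> vG (MPoint z z' 0).
Proof. intro; split; simpl; auto; lra. Qed.

Lemma VLB_vv z z' w w' : adj z z' -> adj w w' -> DG z w <= mdG (MPoint z z' 0) (MPoint w w' 0).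
Proof.
  intros Az Aw. pose proof (LIP_G z (vzero Az) (vzero Aw)). unfold rho in H; simpl in H.
  rewrite DLrefl_G in H. pose proof (DLtri_G w w' z). pose proof (DLadj_G Aw).
  pose proof (DLnn_G z' z). pose proof (DLnn_G w' z). rewrite (DLsym_G w z) in *. rsolve.
Qed.

Lemma VLB_vm z z' w w' : adj z z' -> adj w w' ->
  k/2 + Rmin (DG z w) (DG z w') <= mdG (MPoint z z' 0) (MPoint w w' (k/2)).
Proof.
  intros Az Aw. pose proof (LIP_G z (vzero Az) (vhalf Aw)). unfold rho in H; simpl in H.
  rewrite DLrefl_G in H. pose proof (DLnn_G z' z). rewrite (DLsym_G w z), (DLsym_G w' z) in *. rsolve.
Qed.

Lemma VLB_vr x w z r : adj x w -> adj x z -> 0 <= r <= k/2 -> r <= mdG (MPoint x w 0) (MPoint x z r).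
Proof.
  intros Aw Az Hr. assert (Vr : vG (MPoint x z r)) by (split; simpl; auto; lra).
  pose proof (LIP_G x (vzero Aw) Vr). unfold rho in H; simpl in H.
  rewrite DLrefl_G in H. pose proof (DLnn_G w x). pose proof (DLnn_G z x). rsolve.
Qed.

Lemma zero_move a b c d : vG a -> vG b -> vG c -> vG d -> mdG a c = 0 -> mdG b d = 0 ->
  mdG c d <= mdG a b.
Proof.
  intros Va Vb Vc Vd H1 H2.
  pose proof (mdtri_G Vc Va Vd). pose proof (mdtri_G Va Vb Vd).
  rewrite (mdsym_G Vc Va) in *. lra.
Qed.

Definition VMk (x : mpoint LV) := mp_t x = 0 \/ mp_t x = k/2 \/ mp_t x = k.

Lemma VM_cases x : vL x -> VMk x -> (exists e, AT LV k x e 0) \/ (exists e f, x = MPoint e f (k/2)).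
Proof.
  destruct x as [e f t]; unfold VMk; simpl; intros _ [H|[H|H]]; subst.
  - left; exists e; left; simpl; auto.
  - right; eauto.
  - left; exists f; right; simpl; split; auto; ring.
Qed.

Lemma E1 x q : vL x -> VMk x -> vL q -> mdL x q <= k/2 -> mdL x q <= mdG (hmap k x) (hmap k q).
Proof.
  intros Vx HVM Vq Hle. pose proof (mdnn_L Vx Vq) as Hnn.
  pose proof (HV Vx) as Hx. pose proof (HV Vq) as Hq'.
  destruct (VM_cases Vx HVM) as [[e HA]|[e [f ->]]].
  - assert (AQ : AT LV k q e (mdL x q)) by (apply nearV_L; auto; lra).
    destruct (HAT Vq AQ) as (z & z' & Ez & Az & Z1); [lra|].
    destruct (HAT Vx HA) as (w & w' & Ew & Aw & Z2); [lra|].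
    assert (P : vpair z z' = vpair w w') by congruence.
    assert (V1 : vG (MPoint z z' (k/2 - mdL x q))) by (split; simpl; auto; lra).
    assert (V2 : vG (MPoint w w' (k/2 - 0))) by (split; simpl; auto; lra).
    pose proof (zero_move Hq' Hx V1 V2 Z1 Z2).
    rewrite (mdsym_G Hq' Hx) in H.
    destruct (PAIR (k/2 - mdL x q) (k/2 - 0) P Az) as [E|E]; rewrite E in H; rsolve.
  - pose proof Vx as [Hef Ht]; simpl in Hef.
    destruct (common_data e f) as [[x0 ye] yf] eqn:E.
    destruct (cd_spec Hef E) as (E1 & E2 & A1 & A2).
    rewrite (hmap_eq _ E) in *. destruct (Rle_dec (k/2) (k/2)) as [_|n]; [|lra].
    replace (k/2 - k/2) with 0 in * by ring.
    destruct (nearM_L Vx Vq Hle) as [[Ea Eb]|[[Ea Eb]|[Heq [AQ|AQ]]]].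
    + destruct q as [qa qb s]; simpl in *; subst. destruct Vq as [_ Hs0]; simpl in *.
      rewrite br1_L in *. rewrite (hmap_eq _ E). destruct Rle_dec.
      * pose proof (VLB_vr (r:=k/2 - s) A1 A1 ltac:(lra)). rsolve.
      * pose proof (VLB_vr (r:=k/2 - (k - s)) A1 A2 ltac:(lra)). rsolve.
    + destruct q as [qa qb s]; simpl in *; subst. destruct Vq as [_ Hs0]; simpl in *.
      rewrite br2_L in * by (apply aneq_L; auto). rewrite (hmap_eq _ (cd_rev Hef E)). destruct Rle_dec.
      * pose proof (VLB_vr (r:=k/2 - s) A1 A2 ltac:(lra)). rsolve.
      * pose proof (VLB_vr (r:=k/2 - (k - s)) A1 A1 ltac:(lra)). rsolve.
    + destruct (HAT Vq AQ) as (z & z' & Ez & Az & Z1); [lra|].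
      replace (k/2 - 0) with (k/2) in Z1 by ring.
      pose proof (VLB_vm A1 Az).
      assert (mem : x0 = z \/ x0 = z') by (apply (AT_mem Ez); rewrite E1; left; auto).
      pose proof (DLnn_G x0 z). pose proof (DLnn_G x0 z').
      pose proof (zero_move (vzero A1) Hq' (vzero A1) (vhalf Az) (self_G _) Z1). rsolve.
    + destruct (HAT Vq AQ) as (z & z' & Ez & Az & Z1); [lra|].
      replace (k/2 - 0) with (k/2) in Z1 by ring.
      pose proof (VLB_vm A1 Az).
      pose proof (DLnn_G x0 z). pose proof (DLnn_G x0 z').
      pose proof (zero_move (vzero A1) Hq' (vzero A1) (vhalf Az) (self_G _) Z1). rsolve.
Qed.


Definition XV (x p : mpoint LV) := exists e z z', AT LV k x e 0 /\ proj1_sig e = vpair z z' /\ adj z z' /\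
  mdG (hmap k p) (MPoint z z' 0) = 0.
Definition XM (p : mpoint LV) := exists a, AT LV k p a 0.

Lemma E2 x p : vL x -> VMk x -> vL p -> mdL x p = k/2 -> XV x p \/ XM p.
Proof.
  intros Vx HVM Vp Heq.
  destruct (VM_cases Vx HVM) as [[e HA]|[e [f ->]]].
  - assert (AQ : AT LV k p e (mdL x p)) by (apply nearV_L; auto; lra).
    rewrite Heq in AQ.
    destruct (HAT Vp AQ) as (z & z' & Ez & Az & Z1); [lra|].
    replace (k/2 - k/2) with 0 in Z1 by ring.
    left. exists e, z, z'. auto.
  - right. pose proof Vx as [Hef _]; simpl in Hef.
    destruct (nearM_L Vx Vp ltac:(lra)) as [[Ea Eb]|[[Ea Eb]|[_ [AQ|AQ]]]].
    + destruct p as [qa qb s]; simpl in *; subst. destruct Vp as [_ Hs0]; simpl in *.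
      rewrite br1_L in Heq.
      assert (s = 0 \/ s = k) as [->| ->] by (unfold Rabs in *; destruct Rcase_abs; [right|left]; lra).
      * exists e; left; simpl; auto.
      * exists f; right; simpl; split; auto; ring.
    + destruct p as [qa qb s]; simpl in *; subst. destruct Vp as [_ Hs0]; simpl in *.
      rewrite br2_L in Heq by (apply aneq_L; auto).
      assert (s = 0 \/ s = k) as [->| ->] by (unfold Rabs in *; destruct Rcase_abs; [left|right]; lra).
      * exists f; left; simpl; auto.
      * exists e; right; simpl; split; auto; ring.
    + exists e; auto.
    + exists f; auto.
Qed.

Lemma CVV x p q y L : vL x -> vL p -> vL q -> vL y -> XV x p -> XV y q ->
  mdL p q = L - k -> L <= mdL x y -> L - k <= mdG (hmap k p) (hmap k q).
Proof.
  intros Vx Vp Vq Vy (e & z & z' & AX & Ez & Az & Zp) (h & w & w' & AY & Ew & Aw & Zq) H1 H2.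
  pose proof (mdAT_L Vx Vy AX AY).
  assert (Hz : proj1_sig e z) by (rewrite Ez; left; auto).
  assert (Hw : proj1_sig h w) by (rewrite Ew; left; auto).
  pose proof (W1R Hz Hw). pose proof (VLB_vv Az Aw).
  pose proof (zero_move (HV Vp) (HV Vq) (vzero Az) (vzero Aw) Zp Zq). lra.
Qed.

Lemma CVM x p q y L : vL x -> vL p -> vL q -> vL y -> XV x p -> XM q ->
  mdL q y <= k/2 -> L <= mdL x y -> L - k <= mdG (hmap k p) (hmap k q).
Proof.
  intros Vx Vp Vq Vy (e & z & z' & AX & Ez & Az & Zp) [a AQ] H1 H2.
  destruct (HAT Vq AQ) as (w & w' & Ew & Aw & Zq); [lra|].
  replace (k/2 - 0) with (k/2) in Zq by ring.
  pose proof (mdtri_L Vx Vq Vy). pose proof (mdAT_L Vx Vq AX AQ).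
  assert (Hz : proj1_sig e z) by (rewrite Ez; left; auto).
  assert (Hw : proj1_sig a w) by (rewrite Ew; left; auto).
  assert (Hw' : proj1_sig a w') by (rewrite Ew; right; auto).
  pose proof (W1R Hz Hw). pose proof (W1R Hz Hw'). pose proof (VLB_vm Az Aw).
  pose proof (zero_move (HV Vp) (HV Vq) (vzero Az) (vhalf Aw) Zp Zq). rsolve.
Qed.

Lemma CMM p q L : vL p -> vL q -> XM p -> XM q ->
  mdL p q = L - k -> L - k <= mdG (hmap k p) (hmap k q).
Proof.
  intros Vp Vq [a AP] [b AQ] H1.
  destruct (HAT Vp AP) as (z & z' & Ez & Az & Zp); [lra|].
  destruct (HAT Vq AQ) as (w & w' & Ew & Aw & Zq); [lra|].
  replace (k/2 - 0) with (k/2) in Zp, Zq by ring.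
  pose proof (mdAT_L Vp Vq AP AQ). pose proof (PMLB Ez Az Ew Aw).
  pose proof (zero_move (HV Vp) (HV Vq) (vhalf Az) (vhalf Aw) Zp Zq). lra.
Qed.


Lemma SEG gs L a b : geodesic vL mdL gs L -> 0 <= a <= b -> b <= L ->
  b - a <= mdG (hmap k (gs a)) (hmap k (gs b)) ->
  geodesic vG mdG (fun s => hmap k (gs (a + s))) (b - a).
Proof.
  intros [HL [Hv Hd]] Hab HbL Hend.
  assert (LB : forall s u, 0 <= s <= u -> u <= b - a ->
      u - s <= mdG (hmap k (gs (a + s))) (hmap k (gs (a + u)))).
  { intros s u H1 H2.
    assert (VA : vG (hmap k (gs a))) by (apply HV; apply Hv; lra).
    assert (VB : vG (hmap k (gs b))) by (apply HV; apply Hv; lra).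
    assert (VS : vG (hmap k (gs (a+s)))) by (apply HV; apply Hv; lra).
    assert (VU : vG (hmap k (gs (a+u)))) by (apply HV; apply Hv; lra).
    pose proof (mdtri_G VA VS VB) as T1. pose proof (mdtri_G VS VU VB) as T2.
    pose proof (HLIP (Hv a ltac:(lra)) (Hv (a+s) ltac:(lra))) as T3.
    pose proof (HLIP (Hv (a+u) ltac:(lra)) (Hv b ltac:(lra))) as T4.
    rewrite Hd in T3 by lra. rewrite Hd in T4 by lra.
    rsolve. }
  split; [lra|split].
  - intros s Hs0. cbv beta. apply HV. apply Hv. lra.
  - intros s u Hs0 Hu. cbv beta.
    pose proof (HLIP (Hv (a+s) ltac:(lra)) (Hv (a+u) ltac:(lra))) as T. rewrite Hd in T by lra.
    destruct (Rle_dec s u).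
    + pose proof (LB s u ltac:(lra) ltac:(lra)). rsolve.
    + pose proof (LB u s ltac:(lra) ltac:(lra)) as T'.
      rewrite (mdsym_G (HV (Hv (a+u) ltac:(lra))) (HV (Hv (a+s) ltac:(lra)))) in T'. rsolve.
Qed.

Lemma REV gs L : geodesic vL mdL gs L -> geodesic vL mdL (fun s => gs (L - s)) L.
Proof.
  intros [HL [Hv Hd]]. split; [auto|split].
  - intros s Hs0; cbv beta; apply Hv; lra.
  - intros s u Hs0 Hu; cbv beta. rewrite Hd by lra.
    replace (L - s - (L - u)) with (- (s - u)) by ring. apply Rabs_Ropp.
Qed.

Lemma FIRST gs L x m : geodesic vL mdL gs L -> vL x -> VMk x -> mdL (gs 0) x = 0 ->
  0 <= m <= L -> m <= k/2 -> m <= mdG (hmap k (gs 0)) (hmap k (gs m)).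
Proof.
  intros [HL [Hv Hd]] Vx HVM H0 Hm Hmk.
  pose proof (Hv 0 ltac:(lra)) as V0. pose proof (Hv m ltac:(lra)) as Vm.
  pose proof (mdtri_L V0 Vx Vm) as T1. pose proof (mdtri_L Vx V0 Vm) as T2.
  rewrite (mdsym_L Vx V0) in T2. rewrite Hd in T1, T2 by lra.
  assert (Hxm : mdL x (gs m) = m) by rsolve.
  pose proof (E1 Vx HVM Vm ltac:(lra)) as T3.
  pose proof (HLIP V0 Vx) as T4. pose proof (mdnn_G (HV V0) (HV Vx)) as T5.
  pose proof (mdtri_G (HV Vx) (HV V0) (HV Vm)) as T6. rewrite (mdsym_G (HV Vx) (HV V0)) in T6.
  lra.
Qed.

Lemma MID gs L x y : geodesic vL mdL gs L -> vL x -> VMk x -> vL y -> VMk y ->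
  mdL (gs 0) x = 0 -> mdL (gs L) y = 0 -> k <= L ->
  L - k <= mdG (hmap k (gs (k/2))) (hmap k (gs (L - k/2))).
Proof.
  intros [HL [Hv Hd]] Vx HX Vy HY H0 HL' HkL.
  pose proof (Hv 0 ltac:(lra)) as V0. pose proof (Hv L ltac:(lra)) as VL.
  pose proof (Hv (k/2) ltac:(lra)) as Vp. pose proof (Hv (L - k/2) ltac:(lra)) as Vq.
  set (p := gs (k/2)) in *. set (q := gs (L - k/2)) in *.
  assert (Hxp : mdL x p = k/2).
  { pose proof (mdtri_L V0 Vx Vp) as T1. pose proof (mdtri_L Vx V0 Vp) as T2.
    rewrite (mdsym_L Vx V0) in T2. unfold p in *. rewrite Hd in T1, T2 by lra. rsolve. }
  assert (Hyq : mdL y q = k/2).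
  { pose proof (mdtri_L VL Vy Vq) as T1. pose proof (mdtri_L Vy VL Vq) as T2.
    rewrite (mdsym_L Vy VL) in T2. unfold q in *. rewrite Hd in T1, T2 by lra. rsolve. }
  assert (Hpq : mdL p q = L - k) by (unfold p, q; rewrite Hd by lra; rsolve).
  assert (Hxy : L <= mdL x y).
  { pose proof (mdtri_L V0 Vx VL) as T1. pose proof (mdtri_L Vx Vy VL) as T2.
    rewrite (mdsym_L Vy VL) in T2. rewrite Hd in T1 by lra. rsolve. }
  destruct (E2 Vx HX Vp Hxp) as [XP|XP]; destruct (E2 Vy HY Vq Hyq) as [XQ|XQ].
  - exact (CVV Vx Vp Vq Vy XP XQ Hpq Hxy).
  - apply (CVM Vx Vp Vq Vy XP XQ); auto. rewrite mdsym_L; auto. lra.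
  - rewrite mdsym_G by (apply HV; auto).
    apply (CVM Vy Vq Vp Vx XQ XP).
    + rewrite mdsym_L; auto. lra.
    + rewrite mdsym_L; auto.
  - exact (CMM Vp Vq XP XQ Hpq).
Qed.


Lemma ASM gs L x y b1 a2 b2 a3 :
  geodesic vL mdL gs L -> vL x -> vL y -> mdL (gs 0) x = 0 -> mdL (gs L) y = 0 ->
  0 <= b1 <= k/2 -> b1 <= L -> 0 <= a2 <= b2 -> b2 <= L -> 0 <= a3 <= L -> L - a3 <= k/2 ->
  (forall s, 0 <= s <= L -> s <= b1 \/ (a2 <= s <= b2) \/ a3 <= s) ->
  geodesic vG mdG (fun s => hmap k (gs (0 + s))) (b1 - 0) ->
  geodesic vG mdG (fun s => hmap k (gs (a2 + s))) (b2 - a2) ->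
  geodesic vG mdG (fun s => hmap k (gs (a3 + s))) (L - a3) ->
  exists (g1 g2 g3 : R -> mpoint V) (L1 L2 L3 : R),
    geodesic (is_mpoint adj k) (mdist adj k) g1 L1 /\
    geodesic (is_mpoint adj k) (mdist adj k) g2 L2 /\
    geodesic (is_mpoint adj k) (mdist adj k) g3 L3 /\
    (forall s, 0 <= s <= L ->
       on_path (mdist adj k) g1 L1 (hmap k (gs s)) \/
       on_path (mdist adj k) g2 L2 (hmap k (gs s)) \/
       on_path (mdist adj k) g3 L3 (hmap k (gs s))) /\
    (forall s, 0 <= s <= L1 -> on_path (mdist adj k) (fun u => hmap k (gs u)) L (g1 s)) /\
    (forall s, 0 <= s <= L2 -> on_path (mdist adj k) (fun u => hmap k (gs u)) L (g2 s)) /\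
    (forall s, 0 <= s <= L3 -> on_path (mdist adj k) (fun u => hmap k (gs u)) L (g3 s)) /\
    on_path (mdist adj k) g1 L1 (hmap k x) /\
    on_path (mdist adj k) g3 L3 (hmap k y) /\
    0 <= L1 <= k / 2 /\ 0 <= L3 <= k / 2.
Proof.
  intros G Vx Vy H0 HL Hb1 Hb1L Ha2 Hb2 Ha3 Ha3k Cov G1 G2 G3.
  pose proof G as [HLL [Hv Hd]].
  exists (fun s => hmap k (gs (0 + s))), (fun s => hmap k (gs (a2 + s))), (fun s => hmap k (gs (a3 + s))),
    (b1 - 0), (b2 - a2), (L - a3).
  split; [exact G1|]. split; [exact G2|]. split; [exact G3|].
  split.
  { intros s Hs1. destruct (Cov s Hs1) as [C|[C|C]].
    - left. exists (s - 0); split; [lra|]. cbv beta. replace (0 + (s - 0)) with s by ring. apply self_G.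
    - right; left. exists (s - a2); split; [lra|]. cbv beta. replace (a2 + (s - a2)) with s by ring. apply self_G.
    - right; right. exists (s - a3); split; [lra|]. cbv beta. replace (a3 + (s - a3)) with s by ring. apply self_G. }
  split. { intros s Hs1. exists (0 + s); split; [lra|]. apply self_G. }
  split. { intros s Hs1. exists (a2 + s); split; [lra|]. apply self_G. }
  split. { intros s Hs1. exists (a3 + s); split; [lra|]. apply self_G. }
  split.
  { exists 0; split; [lra|]. cbv beta. replace (0 + 0) with 0 by ring.
    pose proof (HLIP (Hv 0 ltac:(lra)) Vx). pose proof (mdnn_G (HV (Hv 0 ltac:(lra))) (HV Vx)).
    change (mdist adj k) with mdG. lra. }
  split.
  { exists (L - a3); split; [lra|]. cbv beta. replace (a3 + (L - a3)) with L by ring.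
    pose proof (HLIP (Hv L ltac:(lra)) Vy). pose proof (mdnn_G (HV (Hv L ltac:(lra))) (HV Vy)).
    change (mdist adj k) with mdG. lra. }
  split; lra.
Qed.

End LG.

Unset Implicit Arguments.
Set Strict Implicit.

Theorem mainTheorem4 (V : Type) (adj : V -> V -> Prop) (k : R)
  (Hsimple : simple_graph adj) (Hconn : connected adj)
  (Hlf : locally_finite adj) (Hk : 0 < k)
  : forall (gs : R -> mpoint (ledge adj)) (L : R) (x y : mpoint (ledge adj)),
  is_mpoint (ladj (adj:=adj)) (llen k) x ->
  is_mpoint (ladj (adj:=adj)) (llen k) y ->
  vertex_or_mid k x -> vertex_or_mid k y ->
  geodesic (is_mpoint (ladj (adj:=adj)) (llen k))
           (mdist (ladj (adj:=adj)) (llen k)) gs L ->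
  mdist (ladj (adj:=adj)) (llen k) (gs 0) x = 0 ->
  mdist (ladj (adj:=adj)) (llen k) (gs L) y = 0 ->
  exists (g1 g2 g3 : R -> mpoint V) (L1 L2 L3 : R),
    geodesic (is_mpoint adj k) (mdist adj k) g1 L1 /\
    geodesic (is_mpoint adj k) (mdist adj k) g2 L2 /\
    geodesic (is_mpoint adj k) (mdist adj k) g3 L3 /\
    (forall s, 0 <= s <= L ->
       on_path (mdist adj k) g1 L1 (hmap k (gs s)) \/
       on_path (mdist adj k) g2 L2 (hmap k (gs s)) \/
       on_path (mdist adj k) g3 L3 (hmap k (gs s))) /\
    (forall s, 0 <= s <= L1 -> on_path (mdist adj k) (fun u => hmap k (gs u)) L (g1 s)) /\
    (forall s, 0 <= s <= L2 -> on_path (mdist adj k) (fun u => hmap k (gs u)) L (g2 s)) /\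
    (forall s, 0 <= s <= L3 -> on_path (mdist adj k) (fun u => hmap k (gs u)) L (g3 s)) /\
    on_path (mdist adj k) g1 L1 (hmap k x) /\
    on_path (mdist adj k) g3 L3 (hmap k y) /\
    0 <= L1 <= k / 2 /\ 0 <= L3 <= k / 2.
Proof.
  destruct Hsimple as [Hs Hi].
  intros gs L x y Vx Vy Mx My G H0 HL.
  assert (Ek : llen k = k) by (unfold llen; field).
  rewrite Ek in *.
  assert (HX : VMk k x) by (unfold vertex_or_mid, VMk in *; rewrite Ek in *; exact Mx).
  assert (HY : VMk k y) by (unfold vertex_or_mid, VMk in *; rewrite Ek in *; exact My).
  pose proof G as [HLL [Hv Hd]].
  pose proof (REV Hs Hi Hconn Hk G) as G'.
  assert (H0' : mdist (ladj (adj:=adj)) k ((fun s => gs (L - s)) 0) y = 0).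
  { cbv beta. replace (L - 0) with L by ring. exact HL. }
  destruct (Rle_dec k L) as [HkL|HkL].
  -
    pose proof (FIRST Hs Hi Hconn Hk G Vx HX H0 (m := k/2) ltac:(lra) ltac:(lra)) as F1.
    pose proof (FIRST Hs Hi Hconn Hk G' Vy HY H0' (m := k/2) ltac:(lra) ltac:(lra)) as F3.
    cbv beta in F3. replace (L - 0) with L in F3 by ring.
    rewrite (md_sym V adj k Hs Hi Hconn Hk) in F3 by (apply (HV Hs Hi Hconn Hk); auto; apply Hv; lra).
    pose proof (MID Hs Hi Hconn Hk G Vx HX Vy HY H0 HL HkL) as F2.
    apply (ASM Hs Hi Hconn Hk (b1 := k/2) (a2 := k/2) (b2 := L - k/2) (a3 := L - k/2) G Vx Vy H0 HL);
      try lra.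
    + intros s Hs0. lra.
    + apply (SEG Hs Hi Hconn Hk (L:=L)); auto; lra.
    + apply (SEG Hs Hi Hconn Hk (L:=L)); auto; lra.
    + apply (SEG Hs Hi Hconn Hk (L:=L)); auto; lra.
  -
    set (m := Rmin L (k/2)).
    assert (Hm1 : 0 <= m <= L) by (unfold m; rsolve).
    assert (Hm2 : m <= k/2) by (unfold m; rsolve).
    assert (Hm3 : L - m <= k / 2) by (unfold m; rsolve).
    assert (Hm4 : L <= 2 * m) by (unfold m; rsolve).
    pose proof (FIRST Hs Hi Hconn Hk G Vx HX H0 (m := m) ltac:(lra) ltac:(lra)) as F1.
    pose proof (FIRST Hs Hi Hconn Hk G' Vy HY H0' (m := m) ltac:(lra) ltac:(lra)) as F3.
    cbv beta in F3. replace (L - 0) with L in F3 by ring.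
    rewrite (md_sym V adj k Hs Hi Hconn Hk) in F3 by (apply (HV Hs Hi Hconn Hk); auto; apply Hv; lra).
    apply (ASM Hs Hi Hconn Hk (b1 := m) (a2 := 0) (b2 := m) (a3 := L - m) G Vx Vy H0 HL);
      try lra.
    + intros s Hs0. lra.
    + apply (SEG Hs Hi Hconn Hk (L:=L)); auto; lra.
    + apply (SEG Hs Hi Hconn Hk (L:=L)); auto; lra.
    + apply (SEG Hs Hi Hconn Hk (L:=L)); auto; lra.
Qed.
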